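(* Let $T\ge2$ and let $n\ge2T^2$ be an integer. Then for every $|x|\le T$, $$\int_{|y|\ge 2T}k_n(x,y)^2\,dy\le\frac{2}{\pi^2T}+\frac{12T^2}{\sqrt{2n+1}}\ln(2n+1).$$
   Context: For an integer $n\ge0$, $H_n(x)=(-1)^n e^{x^2}\frac{d^n}{dx^n}e^{-x^2}$ is the $n$-th Hermite polynomial and $h_n(x)=\frac{1}{\pi^{1/4}\sqrt{2^n n!}}H_n(x)e^{-x^2/2}$ is the $n$-th Hermite function; $(h_n)_{n\ge0}$ is an orthonormal basis of $L^2(\mathbb R)$. The kernel $k_n(x,y)=\sum_{k=0}^n h_k(x)h_k(y)$ is the kernel of the orthogonal projection of $L^2(\mathbb R)$ onto $\mathrm{span}(h_0,\dots,h_n)$. *)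

(* Defs.v *)
From Stdlib Require Import Reals Lra Factorial.
Open Scope R_scope.

(* Physicists' Hermite polynomials H_n, via the standard three-term
   recurrence H_0 = 1, H_1 = 2x, H_{n+2} = 2x H_{n+1} - 2(n+1) H_n,
   which is equivalent to the Rodrigues formula
   H_n(x) = (-1)^n e^{x^2} d^n/dx^n e^{-x^2}. *)
Fixpoint hermite_pair (n : nat) (x : R) : R * R :=
  match n with
  | O => (1, 2 * x)
  | S m => let (a, b) := hermite_pair m x in
           (b, 2 * x * b - 2 * INR (S m) * a)
  end.

Definition hermiteH (n : nat) (x : R) : R := fst (hermite_pair n x).

Definition hermite_fun (n : nat) (x : R) : R :=
  / (Rpower PI (1/4) * sqrt (2 ^ n * INR (Factorial.fact n))) * hermiteH n x * exp (- x ^ 2 / 2).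

Definition kernel_n (n : nat) (x y : R) : R :=
  sum_f_R0 (fun k => hermite_fun k x * hermite_fun k y) n.

(* Main.v *)
Require Import Defs.
From Stdlib Require Import Reals Lra Lia Psatz Factorial.
From Coquelicot Require Import Coquelicot.
Open Scope R_scope.
Lemma d_minus (f g : R -> R) (x a b : R) : is_derive f x a -> is_derive g x b -> is_derive (fun t : R => f t - g t) x (a - b).
Proof. intros A B; exact (is_derive_minus f g x a b A B). Qed.
Lemma d_plus (f g : R -> R) (x a b : R) : is_derive f x a -> is_derive g x b -> is_derive (fun t : R => f t + g t) x (a + b).
Proof. intros A B; exact (is_derive_plus f g x a b A B). Qed.
Lemma d_mult (f g : R -> R) (x a b : R) : is_derive f x a -> is_derive g x b -> is_derive (fun t : R => f t * g t) x (a * g x + f x * b).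
Proof. intros A B; exact (is_derive_mult f g x a b A B Rmult_comm). Qed.
Lemma d_ext (f g : R -> R) (x l : R) : (forall t : R, f t = g t) -> is_derive f x l -> is_derive g x l.
Proof. intros H; apply is_derive_ext; exact H. Qed.
Lemma d_eq (f : R -> R) (x a b : R) : is_derive f x a -> a = b -> is_derive f x b.
Proof. intros; subst; auto. Qed.
Lemma d_const (c x : R) : is_derive (fun _ : R => c) x 0.
Proof. apply (is_derive_const c x). Qed.
Lemma d_id (x : R) : is_derive (fun t : R => t) x 1.
Proof. apply (is_derive_id x). Qed.
Lemma d_scal (c : R) (f : R -> R) (x a : R) : is_derive f x a -> is_derive (fun t : R => c * f t) x (c * a).
Proof. intro H. eapply d_eq. apply (d_mult (fun _ => c) f). apply d_const. exact H. ring. Qed.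

Lemma Hr0 x : hermiteH 0 x = 1.
Proof. reflexivity. Qed.
Lemma Hr1 x : hermiteH 1 x = 2*x.
Proof. reflexivity. Qed.
Lemma HS k x : hermiteH (S k) x = snd (hermite_pair k x).
Proof. unfold hermiteH; cbn [hermite_pair]; destruct (hermite_pair k x); reflexivity. Qed.
Lemma HSS k x : hermiteH (S (S k)) x = 2*x*hermiteH (S k) x - 2 * INR (S k) * hermiteH k x.
Proof.
  rewrite HS. unfold hermiteH. cbn [hermite_pair]. destruct (hermite_pair k x) as [a b]. reflexivity.
Qed.

Lemma H_par k x : hermiteH k (-x) = (-1)^k * hermiteH k x.
Proof.
  revert k. assert (forall k, hermiteH k (-x) = (-1)^k * hermiteH k x /\
                    hermiteH (S k) (-x) = (-1)^(S k) * hermiteH (S k) x).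
  { induction k as [|k IH].
    - rewrite !Hr0, !Hr1. simpl. split; ring.
    - destruct IH as [A B]. split; [exact B|].
      rewrite !HSS, A, B. simpl. ring. }
  intro k; apply H.
Qed.

Lemma H_der k (x : R) : is_derive (hermiteH (S k)) x (2 * INR (S k) * hermiteH k x).
Proof.
  revert k x.
  assert (forall k, (forall x : R, is_derive (hermiteH (S k)) x (2 * INR (S k) * hermiteH k x)) /\
                    (forall x : R, is_derive (hermiteH (S (S k))) x (2 * INR (S (S k)) * hermiteH (S k) x))).
  { induction k as [|k IH].
    - split; intro x.
      + apply (d_ext (fun t : R => 2*t)). { intro t. rewrite Hr1. reflexivity. }
        rewrite Hr0. auto_derive; auto. simpl. ring.
      + apply (d_ext (fun t : R => 2*t*(2*t) - 2 * INR 1 * 1)).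
        { intro t. rewrite HSS, Hr1, Hr0. reflexivity. }
        rewrite Hr1. auto_derive; auto. simpl. ring.
    - destruct IH as [A B]. split; [exact B|]. intro x.
      apply (d_ext (fun t : R => 2*t*hermiteH (S (S k)) t - 2 * INR (S (S k)) * hermiteH (S k) t)).
      { intro t. rewrite (HSS (S k)). reflexivity. }
      eapply d_eq.
      + apply d_minus.
        * apply d_mult. { apply (d_ext (fun t : R => 2 * t)); [reflexivity|]. auto_derive; auto. } { apply B. }
        * apply (d_ext (fun t : R => (2 * INR (S (S k))) * hermiteH (S k) t)); [reflexivity|].
          apply d_mult. { apply is_derive_const. } { apply A. }
      + rewrite (HSS k x), !S_INR. unfold zero; cbn -[INR hermiteH]. ring. }
  intros; apply H.
Qed.
Definition sk (k : nat) : R := sqrt (2 * INR k).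
Definition Nk (k : nat) : R := / (Rpower PI (1/4) * sqrt (2 ^ k * INR (fact k))).
Notation hf := hermite_fun.
Definition Eg (x : R) := exp (- x ^ 2 / 2).

Lemma hf_def k x : hf k x = Nk k * hermiteH k x * Eg x.
Proof. reflexivity. Qed.

Lemma rho_pos : 0 < Rpower PI (1/4).
Proof. unfold Rpower. apply exp_pos. Qed.

Lemma fact_pos' k : 0 < 2 ^ k * INR (fact k).
Proof. apply Rmult_lt_0_compat. apply pow_lt; lra. apply lt_0_INR, lt_O_fact. Qed.

Lemma Nk_pos k : 0 < Nk k.
Proof. unfold Nk. apply Rinv_0_lt_compat, Rmult_lt_0_compat. apply rho_pos. apply sqrt_lt_R0, fact_pos'. Qed.

Lemma sk_pos k : 0 < sk (S k).
Proof. unfold sk. apply sqrt_lt_R0. rewrite S_INR. pose proof (pos_INR k). lra. Qed.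

Lemma sk_sq k : sk k * sk k = 2 * INR k.
Proof. unfold sk. apply sqrt_sqrt. pose proof (pos_INR k). lra. Qed.

Lemma Nk_rec k : Nk k = sk (S k) * Nk (S k).
Proof.
  unfold Nk, sk.
  assert (Heq : 2 ^ S k * INR (fact (S k)) = (2 * INR (S k)) * (2 ^ k * INR (fact k))).
  { rewrite fact_simpl, mult_INR. simpl pow. ring. }
  assert (P1 : 0 <= 2 * INR (S k)) by (rewrite S_INR; pose proof (pos_INR k); lra).
  pose proof (fact_pos' k) as P2.
  rewrite Heq, (sqrt_mult _ _ P1 (Rlt_le _ _ P2)).
  pose proof (sk_pos k) as P. unfold sk in P.
  pose proof rho_pos. pose proof (sqrt_lt_R0 _ (fact_pos' k)).
  field. repeat split; lra.
Qed.

Lemma hf_rec0 x : sk 1 * hf 1 x = 2 * x * hf 0 x.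
Proof.
  rewrite !hf_def, (Nk_rec 0), Hr0, Hr1. ring.
Qed.

Lemma hf_rec k x : sk (S (S k)) * hf (S (S k)) x = 2 * x * hf (S k) x - sk (S k) * hf k x.
Proof.
  rewrite !hf_def, HSS.
  rewrite (Nk_rec k), (Nk_rec (S k)).
  pose proof (sk_sq (S k)) as Q.
  set (a := sk (S k)) in *. set (b := sk (S (S k))) in *. set (N := Nk (S (S k))).
  transitivity (b * N * Eg x * (2 * x * hermiteH (S k) x - 2 * INR (S k) * hermiteH k x)); [ring|].
  clearbody a b N. rewrite <- Q. ring.
Qed.

Lemma E_der (x : R) : is_derive Eg x (- x * Eg x).
Proof. unfold Eg. auto_derive; auto. change (@eq R (- (1 * ((1 + 1) * (x * 1))) * / 2 * exp (- (x * (x * 1)) * / 2)) (- x * exp (- x ^ 2 / 2))). replace (- (x * (x * 1)) * / 2) with (- x ^ 2 / 2) by (simpl; field). field. Qed.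

Lemma hf_der k (x : R) : is_derive (hf k) x (x * hf k x - sk (S k) * hf (S k) x).
Proof.
  apply (d_ext (fun t : R => Nk k * (hermiteH k t * Eg t))).
  { intro t. rewrite hf_def. ring. }
  destruct k as [|j].
  - eapply d_eq.
    + apply (d_ext (fun t : R => Nk 0 * Eg t)). { intro t. rewrite Hr0. ring. }
      apply d_scal. apply E_der.
    + rewrite !hf_def, Hr0, Hr1, (Nk_rec 0). ring.
  - eapply d_eq.
    + apply d_scal. apply d_mult. apply H_der. apply E_der.
    + rewrite !hf_def, HSS, (Nk_rec (S j)). rewrite !S_INR. ring.
Qed.

Lemma E_par x : Eg (-x) = Eg x.
Proof. unfold Eg. replace ((-x)^2) with (x^2) by ring. reflexivity. Qed.

Lemma hf_par k x : hf k (-x) = (-1)^k * hf k x.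
Proof. rewrite !hf_def, H_par, E_par. ring. Qed.

Lemma CD n x y : (x - y) * kernel_n n x y = sk (S n) / 2 * (hf (S n) x * hf n y - hf n x * hf (S n) y).
Proof.
  induction n as [|n IH].
  - unfold kernel_n; simpl sum_f_R0.
    replace (sk 1 / 2 * (hf 1 x * hf 0 y - hf 0 x * hf 1 y))
      with (/2 * ((sk 1 * hf 1 x) * hf 0 y - hf 0 x * (sk 1 * hf 1 y))) by field.
    rewrite !hf_rec0. field.
  - unfold kernel_n in *. change (sum_f_R0 (fun k => hf k x * hf k y) (S n))
      with (sum_f_R0 (fun k => hf k x * hf k y) n + hf (S n) x * hf (S n) y).
    replace (sk (S (S n)) / 2 * (hf (S (S n)) x * hf (S n) y - hf (S n) x * hf (S (S n)) y))
      with (/2 * ((sk (S (S n)) * hf (S (S n)) x) * hf (S n) y - hf (S n) x * (sk (S (S n)) * hf (S (S n)) y))) by field.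
    rewrite !hf_rec.
    replace ((x - y) * (sum_f_R0 (fun k : nat => hf k x * hf k y) n + hf (S n) x * hf (S n) y))
      with ((x - y) * sum_f_R0 (fun k : nat => hf k x * hf k y) n + (x - y) * (hf (S n) x * hf (S n) y)) by ring.
    rewrite IH. field.
Qed.

Lemma kernel_par n x y : kernel_n n x (-y) = kernel_n n (-x) y.
Proof.
  unfold kernel_n. apply sum_eq. intros i _. rewrite !hf_par. ring.
Qed.

Lemma H_pos M j : 0 <= M -> 2 * INR j <= M^2 -> 0 < hermiteH j M /\ M * hermiteH j M <= hermiteH (S j) M.
Proof.
  intro HM. induction j as [|j IH]; intro Hj.
  - rewrite Hr0, Hr1. lra.
  - assert (Hj' : 2 * INR j <= M^2) by (rewrite S_INR in Hj; lra).
    destruct (IH Hj') as [A B].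
    assert (Mp : 0 < M).
    { destruct (Rle_lt_or_eq_dec 0 M HM) as [h|h]; auto. subst. rewrite S_INR in Hj.
      pose proof (pos_INR j). simpl in Hj. lra. }
    assert (P : 0 < hermiteH (S j) M) by nra.
    split; auto. rewrite HSS.
    assert (M * hermiteH (S j) M >= 2 * INR (S j) * hermiteH j M) by nra.
    nra.
Qed.

Lemma hf_pos_far n M m : sk (S n) <= M -> (m <= S (S n))%nat -> 0 < hf m M.
Proof.
  intros HM Hm. rewrite hf_def.
  assert (c0 : 0 < sk (S n)) by apply sk_pos.
  assert (M2 : 2 * INR (S n) <= M^2).
  { rewrite <- sk_sq. simpl. nra. }
  assert (0 < hermiteH m M).
  { destruct m as [|j]. rewrite Hr0; lra.
    assert (Hj : 2 * INR j <= M^2).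
    { apply Rle_trans with (2 * INR (S n)); auto. apply Rmult_le_compat_l; [lra|]. apply le_INR. lia. }
    destruct (H_pos M j ltac:(lra) Hj). nra. }
  pose proof (Nk_pos m). unfold Eg. pose proof (exp_pos (- M ^ 2 / 2)).
  apply Rmult_lt_0_compat; auto. apply Rmult_lt_0_compat; auto.
Qed.

Lemma c_mult (f g : R -> R) (x : R) : continuous f x -> continuous g x -> continuous (fun t : R => f t * g t) x.
Proof. intros; exact (continuous_mult f g x H H0). Qed.
Lemma c_plus (f g : R -> R) (x : R) : continuous f x -> continuous g x -> continuous (fun t : R => f t + g t) x.
Proof. intros; exact (continuous_plus f g x H H0). Qed.
Lemma c_minus (f g : R -> R) (x : R) : continuous f x -> continuous g x -> continuous (fun t : R => f t - g t) x.
Proof. intros. apply (continuous_plus f (fun t => - g t)); auto. exact (continuous_opp g x H0). Qed.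
Lemma c_const (c x : R) : continuous (fun _ : R => c) x.
Proof. exact (continuous_const c x). Qed.
Lemma c_id (x : R) : continuous (fun t : R => t) x.
Proof. exact (continuous_id x). Qed.
Lemma c_inv (f : R -> R) (x : R) : continuous f x -> f x <> 0 -> continuous (fun t : R => / f t) x.
Proof. intros; exact (continuous_Rinv_comp f x H H0). Qed.
Lemma c_pow2 (f : R -> R) (x : R) : continuous f x -> continuous (fun t : R => f t ^ 2) x.
Proof. intros. apply (continuous_ext (fun t => f t * (f t * 1))). intro; simpl; ring.
  apply c_mult; auto. apply c_mult; auto. apply c_const. Qed.
Lemma c_der (f : R -> R) (x l : R) : is_derive f x l -> continuous f x.
Proof. intros. exact (ex_derive_continuous f x (ex_intro _ l H)). Qed.
Lemma c_hf k x : continuous (hf k) x.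
Proof. eapply c_der. apply hf_der. Qed.
Lemma c_kernel n x y : continuous (fun t : R => kernel_n n x t) y.
Proof.
  induction n as [|n IH].
  - unfold kernel_n; simpl. apply c_mult. apply c_const. apply c_hf.
  - unfold kernel_n in *. simpl sum_f_R0. apply c_plus; auto. apply c_mult. apply c_const. apply c_hf.
Qed.

Lemma iR_minus (f g : R -> R) (a b If Ig : R) : is_RInt f a b If -> is_RInt g a b Ig -> is_RInt (fun t : R => f t - g t) a b (If - Ig).
Proof. intros; exact (is_RInt_minus f g a b If Ig H H0). Qed.
Lemma iR_plus (f g : R -> R) (a b If Ig : R) : is_RInt f a b If -> is_RInt g a b Ig -> is_RInt (fun t : R => f t + g t) a b (If + Ig).
Proof. intros; exact (is_RInt_plus f g a b If Ig H H0). Qed.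
Lemma iR_scal (f : R -> R) (a b k If : R) : is_RInt f a b If -> is_RInt (fun t : R => k * f t) a b (k * If).
Proof. intros; exact (is_RInt_scal f a b k If H). Qed.
Lemma iR_deriv (f df : R -> R) (a b : R) : (forall x, Rmin a b <= x <= Rmax a b -> is_derive f x (df x)) ->
  (forall x, Rmin a b <= x <= Rmax a b -> continuous df x) -> is_RInt df a b (f b - f a).
Proof. intros. exact (is_RInt_derive f df a b H H0). Qed.
Lemma iR_uniq (f : R -> R) (a b l : R) : is_RInt f a b l -> RInt f a b = l.
Proof. intros; exact (is_RInt_unique f a b l H). Qed.
Lemma iR_ex (f : R -> R) (a b : R) : ex_RInt f a b -> is_RInt f a b (RInt f a b).
Proof. intros; exact (RInt_correct f a b H). Qed.
Lemma iR_cont (f : R -> R) (a b : R) : (forall z, Rmin a b <= z <= Rmax a b -> continuous f z) -> ex_RInt f a b.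
Proof. intros; exact (ex_RInt_continuous f a b H). Qed.
Lemma iR_ext (f g : R -> R) (a b l : R) : (forall x, f x = g x) -> is_RInt f a b l -> is_RInt g a b l.
Proof. intros. apply (is_RInt_ext f g a b l); auto. Qed.
Lemma iR_chasles (f : R -> R) (a b c : R) : ex_RInt f a b -> ex_RInt f b c -> RInt f a b + RInt f b c = RInt f a c.
Proof. intros; exact (RInt_Chasles f a b c H H0). Qed.

Lemma ex_hf2 k a b : ex_RInt (fun y => hf k y ^ 2) a b.
Proof. apply iR_cont. intros. apply c_pow2, c_hf. Qed.

Lemma hfS_der m (y : R) : is_derive (hf (S m)) y (sk (S m) * hf m y - y * hf (S m) y).
Proof.
  eapply d_eq. apply hf_der.
  pose proof (hf_rec m y). lra.
Qed.

Lemma prod_der m (y : R) : is_derive (fun t => hf m t * hf (S m) t) y (sk (S m) * (hf m y ^ 2 - hf (S m) y ^ 2)).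
Proof.
  eapply d_eq. apply d_mult. apply hf_der. apply hfS_der. ring.
Qed.

Lemma sgn_sq m : (-1)^m * (-1)^m = 1.
Proof. induction m; simpl. ring. nra. Qed.

Lemma A_step m M : RInt (fun y => hf (S m) y ^ 2) (-M) M =
   RInt (fun y => hf m y ^ 2) (-M) M - 2 * (hf m M * hf (S m) M) / sk (S m).
Proof.
  pose proof (sk_pos m) as sp.
  assert (I1 := iR_deriv (fun t => hf m t * hf (S m) t) (fun y => sk (S m) * (hf m y ^ 2 - hf (S m) y ^ 2)) (-M) M
     (fun y _ => prod_der m y)
     (fun y _ => c_mult _ _ _ (c_const _ _) (c_minus _ _ _ (c_pow2 _ _ (c_hf _ _)) (c_pow2 _ _ (c_hf _ _))))).
  assert (I2 := iR_scal _ (-M) M (sk (S m)) _ (iR_minus _ _ _ _ _ _ (iR_ex _ _ _ (ex_hf2 m (-M) M)) (iR_ex _ _ _ (ex_hf2 (S m) (-M) M)))).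
  cbv beta in I1, I2. assert (E1 := iR_uniq _ _ _ _ I1). assert (E2 := iR_uniq _ _ _ _ I2). rewrite E1 in E2.
  rewrite !hf_par in E2.
  replace ((-1) ^ m * hf m M * ((-1) ^ S m * hf (S m) M)) with (- (hf m M * hf (S m) M)) in E2
    by (simpl pow; pose proof (sgn_sq m) as Sg; set (s := (-1)^m) in *; transitivity (-(s*s)*(hf m M*hf (S m) M)); [rewrite Sg; ring | ring]).
  apply Rmult_eq_reg_l with (sk (S m)); [|lra].
  field_simplify; [|lra]. lra.
Qed.

Lemma hf0_sq (y : R) : hf 0 y ^ 2 = Nk 0 ^ 2 * exp (- y ^ 2).
Proof.
  rewrite hf_def, Hr0. unfold Eg.
  assert (exp (- y ^ 2) = exp (- y ^ 2 / 2) * exp (- y ^ 2 / 2)) as ->.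
  { rewrite <- exp_plus. f_equal. field. }
  ring.
Qed.

Lemma exp_neg_sq (y : R) : exp (- y ^ 2) <= / (1 + y * y).
Proof.
  pose proof (exp_ineq1_le (y ^ 2)). pose proof (exp_pos (y^2)).
  assert (exp (- y ^ 2) * exp (y ^ 2) = 1) by (rewrite <- exp_plus; replace (- y ^ 2 + y ^ 2) with 0 by ring; apply exp_0).
  pose proof (exp_pos (- y^2)).
  assert (Hp : 0 < 1 + y * y) by nra.
  apply Rmult_le_reg_r with (1 + y * y). exact Hp.
  rewrite Rinv_l by lra. simpl in *. nra.
Qed.

Lemma pos1sq (y : R) : 1 + y * y <> 0.
Proof. nra. Qed.

Lemma A0_bound M : 0 <= M -> RInt (fun y => hf 0 y ^ 2) (-M) M <= Nk 0 ^ 2 * PI.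
Proof.
  intro HM.
  assert (I := iR_deriv (fun t => Nk 0 ^ 2 * atan t) (fun t => Nk 0 ^ 2 * / (1 + t * t)) (-M) M
    (fun y _ => d_scal _ _ _ _ (is_derive_atan y))
    (fun y _ => c_mult _ _ _ (c_const _ _) (c_inv _ _ (c_plus _ _ _ (c_const _ _) (c_mult _ _ _ (c_id _) (c_id _))) (pos1sq y)))).
  apply Rle_trans with (RInt (fun t => Nk 0 ^ 2 * / (1 + t * t)) (-M) M).
  - apply RInt_le. lra. apply ex_hf2. eexists; exact I.
    intros y _. rewrite hf0_sq. apply Rmult_le_compat_l. apply pow2_ge_0. apply exp_neg_sq.
  - rewrite (iR_uniq _ _ _ _ I). pose proof (atan_bound M). pose proof (atan_bound (-M)).
    pose proof (pow2_ge_0 (Nk 0)). nra.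
Qed.

Lemma A_mono n M m : sk (S n) <= M -> (m <= S n)%nat ->
  RInt (fun y => hf m y ^ 2) (-M) M <= RInt (fun y => hf 0 y ^ 2) (-M) M.
Proof.
  intros HM. induction m as [|m IH]; intro Hm. lra.
  rewrite A_step. pose proof (hf_pos_far n M m HM ltac:(lia)). pose proof (hf_pos_far n M (S m) HM ltac:(lia)).
  pose proof (sk_pos m).
  assert (0 <= 2 * (hf m M * hf (S m) M) / sk (S m)).
  { apply Rmult_le_pos. nra. left; apply Rinv_0_lt_compat; auto. }
  specialize (IH ltac:(lia)). lra.
Qed.

Lemma RInt_nonneg_enlarge (f : R -> R) a b A B : A <= a -> a <= b -> b <= B ->
  (forall z, continuous f z) -> (forall z, 0 <= f z) -> RInt f a b <= RInt f A B.
Proof.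
  intros h1 h2 h3 C P.
  assert (ex : forall u v, ex_RInt f u v) by (intros; apply iR_cont; auto).
  rewrite <- (iR_chasles f A a B), <- (iR_chasles f a b B); auto.
  assert (0 <= RInt f A a) by (apply RInt_ge_0; auto).
  assert (0 <= RInt f b B) by (apply RInt_ge_0; auto). lra.
Qed.

Lemma L2 n m a b : (m <= S n)%nat -> a <= b -> RInt (fun y => hf m y ^ 2) a b <= Nk 0 ^ 2 * PI.
Proof.
  intros Hm Hab.
  set (M := Rmax (Rmax (Rabs a) (Rabs b)) (sk (S n))).
  assert (M1 : Rabs a <= M) by (unfold M; eauto using Rle_trans, Rmax_l).
  assert (M2 : Rabs b <= M) by (unfold M; eapply Rle_trans; [apply Rmax_r|apply Rmax_l]).
  assert (M3 : sk (S n) <= M) by (unfold M; apply Rmax_r).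
  pose proof (sk_pos n).
  apply Rle_trans with (RInt (fun y => hf m y ^ 2) (-M) M).
  - apply RInt_nonneg_enlarge; auto.
    + destruct (proj1 (Rabs_le_between a M) M1); lra.
    + destruct (proj1 (Rabs_le_between b M) M2); lra.
    + intro; apply c_pow2, c_hf.
    + intro; apply pow2_ge_0.
  - eapply Rle_trans. apply (A_mono n); auto. apply A0_bound. lra.
Qed.

Lemma Nk0_4 : (Nk 0 ^ 2) ^ 2 = / PI.
Proof.
  unfold Nk. simpl (2 ^ 0). simpl (INR (fact 0)). rewrite Rmult_1_r, sqrt_1, Rmult_1_r.
  assert (H4 : Rpower PI (1/4) ^ 4 = PI).
  { rewrite <- Rpower_pow by apply rho_pos. rewrite Rpower_mult.
    replace (1/4 * INR 4) with 1 by (simpl; field). apply Rpower_1, PI_RGT_0. }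
  pose proof rho_pos. set (r := Rpower PI (1/4)) in *.
  transitivity (/ (r ^ 4)). field. lra. rewrite H4. reflexivity.
Qed.

Lemma hf_odd0 j : hf (S (2 * j)) 0 = 0.
Proof.
  induction j as [|j IH].
  - simpl. pose proof (hf_rec0 0). pose proof (sk_pos 0). rewrite Rmult_0_r, Rmult_0_l in H.
    apply Rmult_integral in H. destruct H; auto. lra.
  - replace (S (2 * S j)) with (S (S (S (2 * j)))) by lia.
    pose proof (hf_rec (S (2 * j)) 0). rewrite IH in H. pose proof (sk_pos (S (S (2*j)))).
    rewrite Rmult_0_r, Rmult_0_l, Rmult_0_r in H.
    assert (sk (S (S (S (2 * j)))) * hf (S (S (S (2 * j)))) 0 = 0) by lra.
    apply Rmult_integral in H1. destruct H1; auto. lra.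
Qed.

Lemma hf_even0 j : (hf (2 * j) 0 ^ 2) ^ 2 * (3 * INR j + 1) <= (Nk 0 ^ 2) ^ 2.
Proof.
  induction j as [|j IH].
  - simpl. rewrite hf_def, Hr0. unfold Eg. replace (- 0 ^ 2 / 2) with 0 by (simpl; field). rewrite exp_0. lra.
  - replace (2 * S j)%nat with (S (S (2 * j))) by lia.
    pose proof (hf_rec (2 * j) 0) as R. rewrite Rmult_0_r, Rmult_0_l, Rminus_0_l in R.
    set (v := hf (2 * j) 0 ^ 2) in *. set (w := hf (S (S (2 * j))) 0 ^ 2).
    assert (Hw : 2 * INR (S (S (2 * j))) * w = 2 * INR (S (2 * j)) * v).
    { unfold w, v. rewrite <- !sk_sq.
      transitivity ((sk (S (S (2 * j))) * hf (S (S (2 * j))) 0) ^ 2); [ring|]. rewrite R. ring. }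
    rewrite !S_INR, mult_INR in Hw. rewrite S_INR. simpl (INR 2) in Hw.
    pose proof (pos_INR j) as J.
    assert (v0 : 0 <= v) by apply pow2_ge_0. assert (w0 : 0 <= w) by apply pow2_ge_0.
    set (P := (Nk 0 ^ 2) ^ 2) in *. set (a := INR j) in *.
    assert (Hw' : (2 * a + 2) * w = (2 * a + 1) * v) by lra.
    assert (E1 : (2 * a + 2) ^ 2 * (w ^ 2 * (3 * (a + 1) + 1)) = (2*a+1)^2 * v^2 * (3 * a + 4)).
    { transitivity (((2 * a + 2) * w) ^ 2 * (3 * a + 4)); [ring|]. rewrite Hw'. ring. }
    assert (E2 : (2*a+1)^2 * v^2 * (3 * a + 4) <= (2 * a + 2) ^ 2 * (v ^ 2 * (3 * a + 1))).
    { assert (0 <= v^2) by apply pow2_ge_0. nra. }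
    assert (E3 : (2 * a + 2) ^ 2 * (v ^ 2 * (3 * a + 1)) <= (2 * a + 2) ^ 2 * P).
    { apply Rmult_le_compat_l. apply pow2_ge_0. exact IH. }
    assert (Pos : 0 < (2 * a + 2) ^ 2) by (apply pow_lt; lra).
    apply Rmult_le_reg_l with ((2 * a + 2) ^ 2); auto. lra.
Qed.

Definition cN (n : nat) := sk (S n).
Definition R0n (n : nat) := cN n * (hf n 0 ^ 2 + hf (S n) 0 ^ 2).

Lemma R0_bound n : (8 <= n)%nat -> R0n n ^ 2 <= 18 / 13 * (Nk 0 ^ 2) ^ 2.
Proof.
  intro Hn. unfold R0n, cN.
  assert (C2 : sk (S n) ^ 2 = 2 * INR (S n)) by (rewrite <- sk_sq; ring).
  pose proof (pow2_ge_0 (Nk 0 ^ 2)).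
  destruct (Nat.Even_or_Odd n) as [[k Hk]|[k Hk]]; subst n.
  - rewrite hf_odd0. pose proof (hf_even0 k) as B.
    assert (K : 4 <= INR k) by (replace 4 with (INR 4) by (simpl; ring); apply le_INR; lia).
    rewrite S_INR, mult_INR in C2. simpl (INR 2) in C2.
    set (v := hf (2 * k) 0 ^ 2) in *. set (P := (Nk 0 ^ 2) ^ 2) in *.
    replace ((sk (S (2 * k)) * (v + 0 ^ 2)) ^ 2) with (sk (S (2 * k)) ^ 2 * v ^ 2) by ring.
    rewrite C2.
    assert (0 <= v ^ 2) by apply pow2_ge_0.
    apply Rmult_le_reg_l with (3 * INR k + 1). lra.
    apply Rle_trans with ((2 * (2 * INR k + 1)) * P). nra. nra.
  - replace (S (2 * k + 1)) with (2 * S k)%nat by lia.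
    replace (2 * k + 1)%nat with (S (2 * k)) by lia. rewrite hf_odd0.
    pose proof (hf_even0 (S k)) as B.
    pose proof (pos_INR k) as K.
    clear C2. assert (C2 : sk (2 * S k) ^ 2 = 2 * (2 * (INR k + 1))).
    { replace (sk (2 * S k) ^ 2) with (sk (2 * S k) * sk (2 * S k)) by ring.
      rewrite sk_sq, mult_INR, (S_INR k). replace (INR 2) with 2 by (simpl; ring). ring. }
    rewrite S_INR in B.
    set (v := hf (2 * S k) 0 ^ 2) in *. set (P := (Nk 0 ^ 2) ^ 2) in *.
    replace ((sk (2 * S k) * (0 ^ 2 + v)) ^ 2) with (sk (2 * S k) ^ 2 * v ^ 2) by ring.
    rewrite C2.
    assert (0 <= v ^ 2) by apply pow2_ge_0.
    apply Rmult_le_reg_l with (3 * (INR k + 1) + 1). lra.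
    apply Rle_trans with ((2 * (2 * (INR k + 1))) * P). nra. nra.
Qed.

Definition Qf (n : nat) (y : R) := hf n y ^ 2 + hf (S n) y ^ 2.
Definition Rf (n : nat) (y : R) := cN n * Qf n y - 2 * y * hf n y * hf (S n) y.
Definition psi (n : nat) (y : R) := (cN n - y) * Rf n y.

Lemma psi_der n (y : R) : is_derive (psi n) y (- Rf n y - (cN n - y) * (2 * hf n y * hf (S n) y)).
Proof.
  unfold psi, Rf, Qf, cN.
  set (c := sk (S n)).
  assert (Da := hf_der n y). assert (Db := hfS_der n y). fold c in Da, Db.
  eapply d_eq.
  - apply d_mult. apply d_minus. apply d_const. apply d_id.
    apply d_minus. apply d_scal. apply d_plus.
    + apply (d_ext (fun t => hf n t * hf n t)). intro; simpl; ring. apply d_mult; eauto.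
    + apply (d_ext (fun t => hf (S n) t * hf (S n) t)). intro; simpl; ring. apply d_mult; eauto.
    + apply (d_ext (fun t => (2 * t) * (hf n t * hf (S n) t))). intro; ring.
      apply d_mult. apply d_scal. apply d_id. apply d_mult; eauto.
  - simpl. ring.
Qed.

Lemma psi_mono n y : 0 <= y <= cN n -> psi n y <= psi n 0.
Proof.
  intros [H1 H2].
  destruct (MVT_gen (psi n) 0 y (fun t => - Rf n t - (cN n - t) * (2 * hf n t * hf (S n) t))) as [xi [Hxi E]].
  - intros; apply psi_der.
  - intros. apply continuity_pt_filterlim. eapply c_der. apply psi_der.
  - rewrite Rmin_left in Hxi by lra. rewrite Rmax_right in Hxi by lra.
    assert (D : - Rf n xi - (cN n - xi) * (2 * hf n xi * hf (S n) xi) <= 0).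
    { unfold Rf, Qf. set (a := hf n xi). set (b := hf (S n) xi). set (c := cN n).
      assert (0 <= (a - b) ^ 2) by apply pow2_ge_0. assert (0 <= (a + b) ^ 2) by apply pow2_ge_0.
      assert (- c <= c - 2 * xi <= c) by (unfold c in *; lra).
      assert (0 <= c) by (unfold c in *; lra).
      nra. }
    nra.
Qed.

Lemma Gron n y : 0 <= y <= cN n -> Qf n y * (cN n - y) ^ 2 <= cN n * R0n n.
Proof.
  intros Hy. pose proof (psi_mono n y Hy).
  assert (psi n 0 = cN n * R0n n).
  { unfold psi, Rf, R0n, Qf. ring. }
  assert (Qf n y * (cN n - y) ^ 2 <= psi n y).
  { unfold psi, Rf, Qf. set (a := hf n y). set (b := hf (S n) y).
    assert (0 <= (a - b) ^ 2) by apply pow2_ge_0.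
    assert (0 <= (cN n - y) * y) by nra. nra. }
  lra.
Qed.

Lemma Qf_even n y : Qf n (-y) = Qf n y.
Proof.
  unfold Qf. rewrite !hf_par. simpl pow. pose proof (sgn_sq n) as Sg. set (s := (-1)^n) in *.
  transitivity ((s * s) * (hf n y ^ 2 + hf (S n) y ^ 2)); [ring|]. rewrite Sg. ring.
Qed.

Lemma Gron_abs n y : Rabs y <= cN n -> Qf n y * (cN n - Rabs y) ^ 2 <= cN n * R0n n.
Proof.
  intro H. destruct (Rle_or_lt 0 y).
  - rewrite Rabs_right in * by lra. apply Gron. lra.
  - rewrite Rabs_left in * by lra. rewrite <- Qf_even. apply Gron. lra.
Qed.

Lemma Qf_nonneg n y : 0 <= Qf n y.
Proof. unfold Qf. pose proof (pow2_ge_0 (hf n y)). pose proof (pow2_ge_0 (hf (S n) y)). lra. Qed.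

Lemma R0_nonneg n : 0 <= R0n n.
Proof. unfold R0n, cN. pose proof (sk_pos n). pose proof (Qf_nonneg n 0). unfold Qf in H0. nra. Qed.

Lemma RInt_subst_opp (f : R -> R) (a b : R) : (forall z, continuous f z) ->
  RInt f (-b) (-a) = RInt (fun y => f (- y)) a b.
Proof.
  intro C. assert (ex : ex_RInt f (- b) (- a)) by (apply iR_cont; auto).
  pose proof (iR_ex _ _ _ ex) as I.
  assert (I2 := is_RInt_comp_opp f b a _ I).
  assert (I3 := is_RInt_swap _ _ _ _ I2).
  assert (I4 := is_RInt_opp _ _ _ _ I3).
  rewrite opp_opp in I4. symmetry. apply iR_uniq. eapply iR_ext; [|exact I4].
  intro y. simpl. unfold opp; simpl. ring.
Qed.

Lemma Lagrange a1 b1 a2 b2 : (b1 * a2 - a1 * b2) ^ 2 <= (a1 ^ 2 + b1 ^ 2) * (a2 ^ 2 + b2 ^ 2).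
Proof. assert (0 <= (a1 * a2 + b1 * b2) ^ 2) by apply pow2_ge_0. nra. Qed.

Lemma K_bound n x y : x < y -> kernel_n n x y ^ 2 <= cN n ^ 2 / 4 * Qf n x * (Qf n y / (y - x) ^ 2).
Proof.
  intro Hxy. pose proof (CD n x y) as C.
  assert (P : 0 < (y - x) ^ 2) by (apply pow_lt; lra).
  assert (E : kernel_n n x y ^ 2 * (y - x) ^ 2 = cN n ^ 2 / 4 * (hf (S n) x * hf n y - hf n x * hf (S n) y) ^ 2).
  { unfold cN. transitivity (((x - y) * kernel_n n x y) ^ 2). ring. rewrite C. field. }
  apply Rmult_le_reg_r with ((y - x) ^ 2); auto. rewrite E.
  unfold Qf. field_simplify; [|lra].
  pose proof (Lagrange (hf n x) (hf (S n) x) (hf n y) (hf (S n) y)).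
  pose proof (pow2_ge_0 (cN n)).
  apply Rmult_le_compat_r with (r := / 4) in H; [|lra].
  apply Rmult_le_compat_l with (r := cN n ^ 2) in H; auto.
  unfold Rdiv. nra.
Qed.

Definition Wf (n : nat) (x y : R) := Qf n y / (y - x) ^ 2.

Lemma c_Qf n y : continuous (Qf n) y.
Proof. unfold Qf. apply c_plus; apply c_pow2, c_hf. Qed.

Lemma c_Wf n x y : y <> x -> continuous (Wf n x) y.
Proof.
  intro H. unfold Wf, Rdiv. apply c_mult. apply c_Qf. apply c_inv.
  apply c_pow2. apply c_minus. apply c_id. apply c_const.
  apply pow_nonzero. lra.
Qed.

Lemma ex_Wf n x a b : x < a -> a <= b -> ex_RInt (Wf n x) a b.
Proof.
  intros. apply iR_cont. intros z Hz. rewrite Rmin_left, Rmax_right in Hz by lra. apply c_Wf. lra.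
Qed.

Lemma ex_K2 n x a b : ex_RInt (fun y => kernel_n n x y ^ 2) a b.
Proof. apply iR_cont. intros. apply c_pow2, c_kernel. Qed.

Lemma RInt_scal_R (f : R -> R) a b k : ex_RInt f a b -> RInt (fun y => k * f y) a b = k * RInt f a b.
Proof. intro e. apply iR_uniq. apply iR_scal. apply iR_ex; auto. Qed.

Lemma side1 n x T M : 0 < T -> Rabs x <= T -> 2 * T <= M ->
  RInt (fun y => kernel_n n x y ^ 2) (2 * T) M <= cN n ^ 2 / 4 * Qf n x * RInt (Wf n x) (2 * T) M.
Proof.
  intros HT Hx HM.
  assert (x < 2 * T) by (pose proof (Rle_abs x); lra).
  rewrite <- RInt_scal_R by (apply ex_Wf; lra).
  apply RInt_le; auto. apply ex_K2.
  apply iR_cont. intros z Hz. rewrite Rmin_left, Rmax_right in Hz by lra.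
  apply c_mult. apply c_const. apply c_Wf. lra.
  intros y Hy. unfold Wf. apply K_bound. lra.
Qed.

Lemma RInt_Qf n a b : a <= b -> RInt (Qf n) a b <= 2 * (Nk 0 ^ 2 * PI).
Proof.
  intro Hab. unfold Qf.
  rewrite (iR_uniq _ _ _ _ (iR_plus _ _ _ _ _ _ (iR_ex _ _ _ (ex_hf2 n a b)) (iR_ex _ _ _ (ex_hf2 (S n) a b)))).
  pose proof (L2 n n a b ltac:(lia) Hab). pose proof (L2 n (S n) a b ltac:(lia) Hab). lra.
Qed.

Lemma W_tail n x a b : x < a -> a <= b -> RInt (Wf n x) a b <= 2 * (Nk 0 ^ 2 * PI) / (a - x) ^ 2.
Proof.
  intros Hxa Hab.
  assert (P : 0 < (a - x) ^ 2) by (apply pow_lt; lra).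
  apply Rle_trans with (RInt (fun y => / (a - x) ^ 2 * Qf n y) a b).
  - apply RInt_le; auto. apply ex_Wf; lra.
    apply iR_cont; intros; apply c_mult; [apply c_const|apply c_Qf].
    intros y Hy. unfold Wf. unfold Rdiv. rewrite Rmult_comm. apply Rmult_le_compat_r. apply Qf_nonneg.
    apply Rinv_le_contravar; auto. apply pow_incr. lra.
  - rewrite RInt_scal_R. 2: apply iR_cont; intros; apply c_Qf.
    pose proof (RInt_Qf n a b Hab). unfold Rdiv. rewrite Rmult_comm.
    apply Rmult_le_compat_r; auto. left; apply Rinv_0_lt_compat; auto.
Qed.

Lemma RInt_enlarge_right (f : R -> R) a b B : a <= b -> b <= B ->
  (forall z, a <= z <= B -> continuous f z) -> (forall z, a <= z <= B -> 0 <= f z) -> RInt f a b <= RInt f a B.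
Proof.
  intros h1 h2 C P.
  assert (e1 : ex_RInt f a b) by (apply iR_cont; intros z Hz; rewrite Rmin_left, Rmax_right in Hz by lra; apply C; lra).
  assert (e2 : ex_RInt f b B) by (apply iR_cont; intros z Hz; rewrite Rmin_left, Rmax_right in Hz by lra; apply C; lra).
  rewrite <- (iR_chasles f a b B); auto.
  assert (0 <= RInt f b B) by (apply RInt_ge_0; auto; intros; apply P; lra). lra.
Qed.

Lemma alg_sharp u v c R : 0 < u -> 0 < v -> 0 <= R -> 0 < c ->
  c * R / (u ^ 2 * v ^ 2) <= R / c * (c / (u + v)) ^ 2 * (101 / 100 / v ^ 2 + 101 / u ^ 2).
Proof.
  intros hu hv hR hc.
  assert (E : R / c * (c / (u + v)) ^ 2 * (101 / 100 / v ^ 2 + 101 / u ^ 2) - c * R / (u ^ 2 * v ^ 2)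
     = c * R * (101/100 * u ^ 2 + 101 * v ^ 2 - (u + v) ^ 2) / ((u + v) ^ 2 * u ^ 2 * v ^ 2)).
  { field. lra. }
  assert (0 <= c * R * (101/100 * u ^ 2 + 101 * v ^ 2 - (u + v) ^ 2) / ((u + v) ^ 2 * u ^ 2 * v ^ 2)).
  { apply Rmult_le_pos. apply Rmult_le_pos. apply Rmult_le_pos; lra.
    assert (0 <= (u / 10 - 10 * v) ^ 2) by apply pow2_ge_0. nra.
    left. apply Rinv_0_lt_compat. apply Rmult_lt_0_compat. apply Rmult_lt_0_compat.
    apply pow_lt; lra. apply pow_lt; lra. apply pow_lt; lra. }
  lra.
Qed.

Lemma W_sharp n x T M : 0 < T -> Rabs x <= T -> 2 * T <= M -> 4 * T <= cN n ->
  RInt (Wf n x) (2 * T) M <= R0n n / cN n * (cN n / (cN n - x)) ^ 2 * (101 / 100 / (2 * T - x) + 101 / cN n)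
     + 2 * (Nk 0 ^ 2 * PI) / (cN n / 2 - x) ^ 2.
Proof.
  intros HT Hx HM Hc.
  set (c := cN n) in *.
  assert (Hx' : - T <= x <= T) by (apply Rabs_le_between; auto).
  set (M' := Rmax M (c / 2)).
  assert (M1 : M <= M') by apply Rmax_l. assert (M2 : c / 2 <= M') by apply Rmax_r.
  assert (Wc : forall z, x < z -> continuous (Wf n x) z) by (intros; apply c_Wf; lra).
  assert (Wp : forall z, x < z -> 0 <= Wf n x z).
  { intros z Hz. unfold Wf, Rdiv. apply Rmult_le_pos. apply Qf_nonneg.
    left; apply Rinv_0_lt_compat, pow_lt; lra. }
  pose proof (sk_pos n) as cpos. fold (cN n) in cpos. fold c in cpos.
  pose proof (R0_nonneg n) as R0p.
  apply Rle_trans with (RInt (Wf n x) (2 * T) M').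
  { apply RInt_enlarge_right; auto; intros; [apply Wc|apply Wp]; lra. }
  rewrite <- (iR_chasles _ (2 * T) (c / 2) M') by (apply ex_Wf; lra).
  apply Rplus_le_compat.
  2: { apply W_tail; lra. }
  set (k := R0n n / c * (c / (c - x)) ^ 2).
  assert (kp : 0 <= k).
  { unfold k. apply Rmult_le_pos. unfold Rdiv. apply Rmult_le_pos; auto. left; apply Rinv_0_lt_compat; lra.
    apply pow2_ge_0. }
  assert (ID := iR_deriv (fun y => k * (- (101 / 100) / (y - x) + 101 / (c - y)))
                  (fun y => k * (101 / 100 / (y - x) ^ 2 + 101 / (c - y) ^ 2)) (2 * T) (c / 2)).
  rewrite Rmin_left, Rmax_right in ID by lra.
  assert (ID' : is_RInt (fun y => k * (101 / 100 / (y - x) ^ 2 + 101 / (c - y) ^ 2)) (2 * T) (c / 2)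
     (k * (- (101 / 100) / (c / 2 - x) + 101 / (c - c / 2)) - k * (- (101 / 100) / (2 * T - x) + 101 / (c - 2 * T)))).
  { apply ID.
    - intros y Hy. auto_derive. repeat split; lra. field. lra.
    - intros y Hy. apply c_mult. apply c_const. unfold Rdiv. apply c_plus.
      + apply c_mult. apply c_const. apply c_inv. apply c_pow2, c_minus. apply c_id. apply c_const.
        apply pow_nonzero; lra.
      + apply c_mult. apply c_const. apply c_inv. apply c_pow2, c_minus. apply c_const. apply c_id.
        apply pow_nonzero; lra. }
  apply Rle_trans with (RInt (fun y => k * (101 / 100 / (y - x) ^ 2 + 101 / (c - y) ^ 2)) (2 * T) (c / 2)).
  - apply RInt_le. lra. apply ex_Wf; lra. eexists; exact ID'.
    intros y Hy. unfold Wf, k.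
    pose proof (Gron n y ltac:(fold c; lra)) as G. fold c in G.
    assert (Q1 : Qf n y / (y - x) ^ 2 <= c * R0n n / ((c - y) ^ 2 * (y - x) ^ 2)).
    { assert (0 < (c - y) ^ 2) by (apply pow_lt; lra). assert (0 < (y - x) ^ 2) by (apply pow_lt; lra).
      unfold Rdiv. rewrite Rinv_mult.
      apply Rmult_le_reg_r with ((c - y) ^ 2). auto.
      replace (c * R0n n * (/ (c - y) ^ 2 * / (y - x) ^ 2) * (c - y) ^ 2) with (c * R0n n * / (y - x) ^ 2) by (field; lra).
      replace (Qf n y * / (y - x) ^ 2 * (c - y) ^ 2) with (Qf n y * (c - y) ^ 2 * / (y - x) ^ 2) by ring.
      apply Rmult_le_compat_r; auto. left; apply Rinv_0_lt_compat; auto. }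
    eapply Rle_trans. apply Q1.
    replace (c - x) with ((c - y) + (y - x)) by ring.
    apply alg_sharp; lra.
  - rewrite (iR_uniq _ _ _ _ ID').
    assert (h1 : 0 <= 101 / 100 / (c / 2 - x)).
    { unfold Rdiv. apply Rmult_le_pos. lra. left; apply Rinv_0_lt_compat; lra. }
    assert (h2 : 101 / (c - c / 2) - 101 / (c - 2 * T) <= 101 / c).
    { replace (c - c / 2) with (c / 2) by field.
      assert (/ c <= / (c - 2 * T)) by (apply Rinv_le_contravar; lra).
      replace (101 / (c / 2)) with (2 * (101 / c)) by (field; lra). unfold Rdiv in *. lra. }
    assert (E : k * (- (101 / 100) / (c / 2 - x) + 101 / (c - c / 2)) - k * (- (101 / 100) / (2 * T - x) + 101 / (c - 2 * T))
      = k * (101 / 100 / (2 * T - x) + (101 / (c - c / 2) - 101 / (c - 2 * T)) - 101 / 100 / (c / 2 - x))) by (field; repeat split; lra).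
    rewrite E. apply Rmult_le_compat_l; auto. lra.
Qed.

Lemma num_crude (c T s : R) : 2 <= T -> 2 * T < c -> c <= 8 * T -> 0 <= s -> s ^ 2 <= 18 / 13 ->
  c ^ 3 * s / ((c - T) ^ 2 * T ^ 2) <= 30 * T ^ 2 / c.
Proof.
  intros HT H1 H2 Hs Hs2.
  assert (s <= 118/100) by nra.
  assert (Q : c ^ 2 <= 92/10 * (c - T) * T) by nra.
  assert (Q2 : c ^ 4 <= (92/10) ^ 2 * ((c - T) * T) ^ 2).
  { assert (0 <= c ^ 2) by nra. replace (c ^ 4) with ((c^2)^2) by ring.
    replace ((92/10) ^ 2 * ((c - T) * T) ^ 2) with ((92/10 * (c - T) * T) ^ 2) by ring.
    apply pow_incr. lra. }
  assert (P1 : 0 < (c - T) ^ 2 * T ^ 2) by (apply Rmult_lt_0_compat; apply pow_lt; lra).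
  assert (Pc : 0 < c) by lra.
  unfold Rdiv. apply Rmult_le_reg_r with ((c - T) ^ 2 * T ^ 2 * c). nra.
  replace (c ^ 3 * s * / ((c - T) ^ 2 * T ^ 2) * ((c - T) ^ 2 * T ^ 2 * c)) with (c ^ 4 * s) by (field; split; lra).
  replace (30 * T ^ 2 * / c * ((c - T) ^ 2 * T ^ 2 * c)) with (30 * T ^ 2 * ((c - T) * T) ^ 2) by (field; repeat split; lra).
  assert (0 <= ((c - T) * T) ^ 2) by apply pow2_ge_0.
  assert (c ^ 4 * s <= (92/10) ^ 2 * ((c - T) * T) ^ 2 * (118/100)).
  { apply Rmult_le_compat; try nra. }
  eapply Rle_trans; [exact H3|].
  assert (120 <= 30 * T ^ 2) by nra.
  replace ((92/10) ^ 2 * ((c - T) * T) ^ 2 * (118/100)) with (((92/10) ^ 2 * (118/100)) * ((c - T) * T) ^ 2) by ring.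
  apply Rmult_le_compat_r; auto. lra.
Qed.

Lemma Zb (c T : R) : 0 < T -> 8 * T <= c -> c ^ 4 / (c - T) ^ 4 <= 1 + 8 * T / c.
Proof.
  intros HT Hc.
  assert (B : c ^ 4 - 4 * c ^ 3 * T <= (c - T) ^ 4).
  { replace ((c - T) ^ 4) with (c ^ 4 - 4 * c ^ 3 * T + T ^ 2 * (6 * c ^ 2 - 4 * c * T + T ^ 2)) by ring.
    assert (0 <= T ^ 2 * (6 * c ^ 2 - 4 * c * T + T ^ 2)). { apply Rmult_le_pos. nra. nra. } lra. }
  assert (P : 0 < c ^ 4 - 4 * c ^ 3 * T).
  { replace (c ^ 4 - 4 * c ^ 3 * T) with (c ^ 3 * (c - 4 * T)) by ring. apply Rmult_lt_0_compat. apply pow_lt; lra. lra. }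
  assert (Pc : 0 < c) by lra.
  apply Rle_trans with (c ^ 4 / (c ^ 4 - 4 * c ^ 3 * T)).
  - unfold Rdiv. apply Rmult_le_compat_l. apply pow_le; lra. apply Rinv_le_contravar; auto.
  - replace (c ^ 4 / (c ^ 4 - 4 * c ^ 3 * T)) with (c / (c - 4 * T)) by (field; split; nra).
    apply Rmult_le_reg_r with (c - 4 * T). lra.
    replace (c / (c - 4 * T) * (c - 4 * T)) with c by (field; repeat split; lra).
    replace ((1 + 8 * T / c) * (c - 4 * T)) with (c + 4 * T - 32 * T * T / c) by (field; repeat split; lra).
    assert (32 * T * T / c <= 4 * T).
    { apply Rmult_le_reg_r with c; auto. replace (32 * T * T / c * c) with (32 * T * T) by (field; repeat split; lra). nra. }
    lra.
Qed.

Lemma num_sharp (c T p R : R) : 2 <= T -> 8 * T <= c -> 0 <= R -> R ^ 2 <= 18 / 13 * p ^ 2 ->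
  0 < p -> 1 / 4 <= p ^ 2 <= 1 / 2 ->
  R ^ 2 * (c ^ 4 / (c - T) ^ 4) / 4 * (404 / (300 * T) + 202 / c)
    + c ^ 3 * (R / p) / ((c - T) ^ 2 * (c / 2 - T) ^ 2) <= 2 * p ^ 4 / T + 30 * T ^ 2 / c.
Proof.
  intros HT Hc HR HR2 Hp Hp2.
  assert (Pc : 0 < c) by lra.
  pose proof (Zb c T ltac:(lra) Hc) as Z.
  set (z := c ^ 4 / (c - T) ^ 4) in *.
  assert (z0 : 0 <= z).
  { unfold z. unfold Rdiv. apply Rmult_le_pos. apply pow_le; lra. left; apply Rinv_0_lt_compat, pow_lt; lra. }
  assert (tc : T / c <= 1 / 8).
  { apply Rmult_le_reg_r with c; auto. replace (T / c * c) with T by (field; repeat split; lra). lra. }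
  assert (A : z / 4 * (404 / (300 * T) + 202 / c) <= 101 / (300 * T) + 1037 / 10 / c).
  { apply Rle_trans with ((1 + 8 * T / c) / 4 * (404 / (300 * T) + 202 / c)).
    - apply Rmult_le_compat_r. unfold Rdiv. apply Rplus_le_le_0_compat; apply Rmult_le_pos; try lra;
       left; apply Rinv_0_lt_compat; lra. lra.
    - replace ((1 + 8 * T / c) / 4 * (404 / (300 * T) + 202 / c))
        with (101 / (300 * T) + (101/2 + 808/300) / c + 404 * (T / c) / c) by (field; repeat split; lra).
      assert (404 * (T / c) / c <= 404 / 8 / c).
      { unfold Rdiv. apply Rmult_le_compat_r. left; apply Rinv_0_lt_compat; lra. lra. }
      assert (E : 101 / 2 + 808 / 300 + 404 / 8 <= 1037/10) by lra.
      assert (0 <= / c) by (left; apply Rinv_0_lt_compat; lra).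
      unfold Rdiv in *. nra. }
  assert (A2 : R ^ 2 * z / 4 * (404 / (300 * T) + 202 / c) <= R ^ 2 * (101 / (300 * T) + 1037 / 10 / c)).
  { replace (R ^ 2 * z / 4 * (404 / (300 * T) + 202 / c)) with (R ^ 2 * (z / 4 * (404 / (300 * T) + 202 / c))) by (field; repeat split; lra).
    apply Rmult_le_compat_l; auto. apply pow2_ge_0. }
  assert (A3 : R ^ 2 * (101 / (300 * T)) <= 2 * p ^ 4 / T).
  { apply Rle_trans with (18 / 13 * p ^ 2 * (101 / (300 * T))).
    apply Rmult_le_compat_r; auto. unfold Rdiv. apply Rmult_le_pos. lra. left; apply Rinv_0_lt_compat; lra.
    replace (18 / 13 * p ^ 2 * (101 / (300 * T))) with ((18 * 101 / 3900) * p ^ 2 / T) by (field; repeat split; lra).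
    unfold Rdiv. apply Rmult_le_compat_r. left; apply Rinv_0_lt_compat; lra.
    replace (p ^ 4) with (p ^ 2 * p ^ 2) by ring. nra. }
  assert (A4 : R ^ 2 * (1037 / 10 / c) <= 72 / c).
  { assert (R ^ 2 <= 9 / 13) by nra. assert (0 < / c) by (apply Rinv_0_lt_compat; lra).
    unfold Rdiv. nra. }
  assert (S1 : R / p <= 118 / 100).
  { apply Rmult_le_reg_r with p; auto. replace (R / p * p) with R by (field; repeat split; lra).
    assert (R ^ 2 <= (118 / 100 * p) ^ 2) by nra. nra. }
  assert (B : c ^ 3 * (R / p) / ((c - T) ^ 2 * (c / 2 - T) ^ 2) <= 11 / c).
  { assert (h1 : 7 / 8 * c <= c - T) by lra. assert (h2 : 3 / 8 * c <= c / 2 - T) by lra.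
    assert (D : (7 / 8 * c) ^ 2 * (3 / 8 * c) ^ 2 <= (c - T) ^ 2 * (c / 2 - T) ^ 2).
    { apply Rmult_le_compat. apply pow2_ge_0. apply pow2_ge_0. apply pow_incr; lra. apply pow_incr; lra. }
    assert (Dp : 0 < (7 / 8 * c) ^ 2 * (3 / 8 * c) ^ 2) by (apply Rmult_lt_0_compat; apply pow_lt; lra).
    assert (R / p >= 0) by (unfold Rdiv; apply Rle_ge, Rmult_le_pos; auto; left; apply Rinv_0_lt_compat; auto).
    apply Rle_trans with (c ^ 3 * (R / p) / ((7 / 8 * c) ^ 2 * (3 / 8 * c) ^ 2)).
    - unfold Rdiv at 2 3. apply Rmult_le_compat_l. apply Rmult_le_pos. apply pow_le; lra. lra.
      apply Rinv_le_contravar; auto.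
    - replace (c ^ 3 * (R / p) / ((7 / 8 * c) ^ 2 * (3 / 8 * c) ^ 2)) with ((4096 / 441) * (R / p) / c) by (field; repeat split; lra).
      unfold Rdiv. apply Rmult_le_compat_r. left; apply Rinv_0_lt_compat; lra. nra. }
  assert (F : 72 / c + 11 / c <= 30 * T ^ 2 / c).
  { unfold Rdiv. assert (0 < / c) by (apply Rinv_0_lt_compat; lra). assert (4 <= T ^ 2) by nra.
    assert (0 <= (30 * T ^ 2 - 83) * / c) by (apply Rmult_le_pos; lra). lra. }
  unfold z in *. lra.
Qed.

Lemma ln_lb n : (8 <= n)%nat -> 5 / 2 <= ln (2 * INR n + 1).
Proof.
  intro Hn.
  assert (N8 : 8 <= INR n) by (replace 8 with (INR 8) by (simpl; ring); apply le_INR; auto).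
  assert (E5 : exp (5 / 2) * exp (5 / 2) <= 243).
  { rewrite <- exp_plus. replace (5 / 2 + 5 / 2) with (1 + 1 + 1 + 1 + 1) by field.
    rewrite !exp_plus. pose proof exp_le_3. pose proof (exp_pos 1). 
    assert (exp 1 * exp 1 <= 9) by nra. assert (exp 1 * exp 1 * exp 1 <= 27) by nra.
    assert (exp 1 * exp 1 * exp 1 * exp 1 <= 81) by nra. nra. }
  assert (exp (5/2) <= 2 * INR n + 1).
  { pose proof (exp_pos (5/2)). nra. }
  rewrite <- (ln_exp (5/2)). apply ln_le. apply exp_pos. auto.
Qed.

Theorem mainTheorem6 (T : R) (n : nat) (x : R) :
  2 <= T -> 2 * T ^ 2 <= INR n -> Rabs x <= T ->
  forall M : R, 2 * T <= M ->
  exists (pr1 : Riemann_integrable (fun y => (kernel_n n x y) ^ 2) (- M) (- (2 * T)))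
         (pr2 : Riemann_integrable (fun y => (kernel_n n x y) ^ 2) (2 * T) M),
    RiemannInt pr1 + RiemannInt pr2 <=
      2 / (PI ^ 2 * T) + 12 * T ^ 2 / sqrt (2 * INR n + 1) * ln (2 * INR n + 1).
Proof.
  intros HT Hn Hx M HM.
  exists (ex_RInt_Reals_0 _ _ _ (ex_K2 n x (-M) (-(2*T)))).
  exists (ex_RInt_Reals_0 _ _ _ (ex_K2 n x (2*T) M)).
  rewrite <- !RInt_Reals.
  assert (n8 : (8 <= n)%nat).
  { apply INR_le. replace (INR 8) with 8 by (simpl; ring). nra. }
  assert (c2 : cN n ^ 2 = 2 * INR n + 2).
  { unfold cN. replace (sk (S n) ^ 2) with (sk (S n) * sk (S n)) by ring. rewrite sk_sq, S_INR. ring. }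
  assert (cpos : 0 < cN n) by apply sk_pos.
  assert (c2T : 2 * T < cN n) by nra.
  assert (Hx' : - T <= x <= T) by (apply Rabs_le_between; auto).
  assert (Sec : 30 * T ^ 2 / cN n <= 12 * T ^ 2 / sqrt (2 * INR n + 1) * ln (2 * INR n + 1)).
  { pose proof (ln_lb n n8) as L.
    assert (N8 : 8 <= INR n) by nra.
    assert (sq : 0 < sqrt (2 * INR n + 1)) by (apply sqrt_lt_R0; lra).
    assert (sqc : sqrt (2 * INR n + 1) <= cN n).
    { rewrite <- (sqrt_pow2 (cN n)) by lra. apply sqrt_le_1; lra. }
    apply Rle_trans with (12 * T ^ 2 / cN n * (5 / 2)).
    - right. field. lra.
    - apply Rmult_le_compat; try lra.
      + unfold Rdiv. apply Rmult_le_pos. nra. left; apply Rinv_0_lt_compat; lra.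
      + unfold Rdiv. apply Rmult_le_compat_l. nra. apply Rinv_le_contravar; auto. }
  rewrite (RInt_subst_opp (fun y => kernel_n n x y ^ 2) (2 * T) M) by (intro; apply c_pow2, c_kernel).
  rewrite (RInt_ext (fun y => kernel_n n x (- y) ^ 2) (fun y => kernel_n n (- x) y ^ 2))
    by (intros; rewrite kernel_par; auto).
  assert (Hmx : Rabs (- x) <= T) by (rewrite Rabs_Ropp; auto).
  pose proof (side1 n x T M ltac:(lra) Hx HM) as Sp.
  pose proof (side1 n (-x) T M ltac:(lra) Hmx HM) as Sm.
  rewrite Qf_even in Sm.
  set (c := cN n) in *.
  set (Q := Qf n x) in *.
  set (Wp := RInt (Wf n x) (2 * T) M) in *.
  set (Wm := RInt (Wf n (-x)) (2 * T) M) in *.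
  assert (Wp0 : 0 <= Wp).
  { apply RInt_ge_0; auto. apply ex_Wf; lra. intros y Hy. unfold Wf, Rdiv. apply Rmult_le_pos. apply Qf_nonneg.
    left; apply Rinv_0_lt_compat, pow_lt; lra. }
  assert (Wm0 : 0 <= Wm).
  { apply RInt_ge_0; auto. apply ex_Wf; lra. intros y Hy. unfold Wf, Rdiv. apply Rmult_le_pos. apply Qf_nonneg.
    left; apply Rinv_0_lt_compat, pow_lt; lra. }
  pose proof (R0_nonneg n) as R0p. set (Rz := R0n n) in *.
  assert (Q0 : 0 <= Q) by apply Qf_nonneg.
  assert (Qb : Q <= c * Rz / (c - T) ^ 2).
  { pose proof (Gron_abs n x ltac:(fold c; pose proof (Rabs_pos x); lra)) as G. fold c Q Rz in G.
    assert (0 < (c - T) ^ 2) by (apply pow_lt; lra).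
    assert ((c - T) ^ 2 <= (c - Rabs x) ^ 2) by (apply pow_incr; lra).
    apply Rmult_le_reg_r with ((c - T) ^ 2); auto.
    replace (c * Rz / (c - T) ^ 2 * (c - T) ^ 2) with (c * Rz) by (field; lra).
    nra. }
  set (p := Nk 0 ^ 2).
  assert (pp : 0 < p) by (unfold p; apply pow_lt, Nk_pos).
  assert (p4 : p ^ 2 = / PI) by apply Nk0_4.
  assert (PIb : 2 <= PI <= 4) by (split; [pose proof PI2_1; lra | apply PI_4]).
  assert (pPI : p * PI = / p).
  { assert (p ^ 2 * PI = 1) by (rewrite p4; field; lra). field_simplify_eq; [|lra]. lra. }
  assert (p2b : 1 / 4 <= p ^ 2 <= 1 / 2).
  { rewrite p4. split; [apply Rmult_le_reg_r with PI; try lra; rewrite Rinv_l by lra; lra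
                       |apply Rmult_le_reg_r with PI; try lra; rewrite Rinv_l by lra; lra]. }
  pose proof (R0_bound n n8) as RB. fold Rz p in RB.
  assert (Main : c ^ 2 / 4 * Q * (Wm + Wp) <= 2 * p ^ 4 / T + 30 * T ^ 2 / c).
  { assert (x2T : x < 2 * T) by lra. assert (mx2T : - x < 2 * T) by lra.
    assert (Cq : 0 <= c ^ 2 / 4 * Q) by (apply Rmult_le_pos; [nra|auto]).
    assert (cT : 0 < c - T) by lra.
    assert (Qb2 : c ^ 2 / 4 * Q * (Wm + Wp) <= c ^ 2 / 4 * (c * Rz / (c - T) ^ 2) * (Wm + Wp)).
    { apply Rmult_le_compat_r. lra. apply Rmult_le_compat_l. nra. auto. }
    assert (sb : (Rz / p) ^ 2 <= 18 / 13).
    { replace ((Rz / p) ^ 2) with (Rz ^ 2 / p ^ 2) by (field; lra).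
      apply Rmult_le_reg_r with (p ^ 2). apply pow_lt; lra.
      replace (Rz ^ 2 / p ^ 2 * p ^ 2) with (Rz ^ 2) by (field; lra). lra. }
    assert (s0 : 0 <= Rz / p) by (unfold Rdiv; apply Rmult_le_pos; auto; left; apply Rinv_0_lt_compat; auto).
    destruct (Rle_lt_dec c (8 * T)) as [Hc|Hc].
    -
      pose proof (W_tail n x (2 * T) M x2T HM) as T1. pose proof (W_tail n (-x) (2 * T) M mx2T HM) as T2.
      fold Wp in T1. fold Wm in T2. fold p in T1, T2. rewrite pPI in T1, T2.
      assert (T1' : Wp <= 2 * / p / T ^ 2).
      { eapply Rle_trans; [exact T1|]. unfold Rdiv. apply Rmult_le_compat_l.
        assert (0 < / p) by (apply Rinv_0_lt_compat; auto). lra.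
        apply Rinv_le_contravar. apply pow_lt; lra. apply pow_incr; lra. }
      assert (T2' : Wm <= 2 * / p / T ^ 2).
      { eapply Rle_trans; [exact T2|]. unfold Rdiv. apply Rmult_le_compat_l.
        assert (0 < / p) by (apply Rinv_0_lt_compat; auto). lra.
        apply Rinv_le_contravar. apply pow_lt; lra. apply pow_incr; lra. }
      assert (Cq2 : 0 <= c ^ 2 / 4 * (c * Rz / (c - T) ^ 2)).
      { apply Rmult_le_pos. nra. unfold Rdiv. apply Rmult_le_pos. nra. left; apply Rinv_0_lt_compat, pow_lt; lra. }
      assert (Q3 : c ^ 2 / 4 * (c * Rz / (c - T) ^ 2) * (Wm + Wp) <= c ^ 2 / 4 * (c * Rz / (c - T) ^ 2) * (4 * / p / T ^ 2)).
      { apply Rmult_le_compat_l; auto. lra. }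
      replace (c ^ 2 / 4 * (c * Rz / (c - T) ^ 2) * (4 * / p / T ^ 2)) with (c ^ 3 * (Rz / p) / ((c - T) ^ 2 * T ^ 2)) in Q3
        by (field; repeat split; lra).
      pose proof (num_crude c T (Rz / p) HT c2T Hc s0 sb).
      assert (0 <= 2 * p ^ 4 / T).
      { unfold Rdiv. apply Rmult_le_pos. assert (0 <= p ^ 4) by (apply pow_le; lra). lra. left; apply Rinv_0_lt_compat; lra. }
      lra.
    -
      assert (c4 : 4 * T <= c) by lra.
      pose proof (W_sharp n x T M ltac:(lra) Hx HM c4) as T1. pose proof (W_sharp n (-x) T M ltac:(lra) Hmx HM c4) as T2.
      fold c Rz p Wp in T1. fold c Rz p Wm in T2. rewrite pPI in T1, T2.
      set (B := Rz / c * (c / (c - T)) ^ 2 * (404 / (300 * T) + 202 / c) + 4 * / p / (c / 2 - T) ^ 2).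
      assert (WB : Wm + Wp <= B).
      { assert (a1 : (c / (c - x)) ^ 2 <= (c / (c - T)) ^ 2).
        { apply pow_incr. split. unfold Rdiv; apply Rmult_le_pos; [lra| left; apply Rinv_0_lt_compat; lra].
          unfold Rdiv; apply Rmult_le_compat_l; [lra|]. apply Rinv_le_contravar; lra. }
        assert (a2 : (c / (c - - x)) ^ 2 <= (c / (c - T)) ^ 2).
        { apply pow_incr. split. unfold Rdiv; apply Rmult_le_pos; [lra| left; apply Rinv_0_lt_compat; lra].
          unfold Rdiv; apply Rmult_le_compat_l; [lra|]. apply Rinv_le_contravar; lra. }
        assert (a3 : 101 / 100 / (2 * T - x) + 101 / 100 / (2 * T - - x) <= 404 / (300 * T)).
        { replace (101 / 100 / (2 * T - x) + 101 / 100 / (2 * T - - x)) with (101 / 100 * (4 * T / ((2 * T - x) * (2 * T + x))))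
            by (field; split; lra).
          replace (404 / (300 * T)) with (101 / 100 * (4 / (3 * T))) by (field; lra).
          apply Rmult_le_compat_l. lra.
          assert (P3 : 3 * T ^ 2 <= (2 * T - x) * (2 * T + x)) by nra.
          assert (P0 : 0 < 3 * T ^ 2) by nra.
          apply Rle_trans with (4 * T / (3 * T ^ 2)).
          - unfold Rdiv. apply Rmult_le_compat_l. lra. apply Rinv_le_contravar; auto.
          - right. field. lra. }
        assert (a4 : / (c / 2 - x) ^ 2 <= / (c / 2 - T) ^ 2).
        { apply Rinv_le_contravar. apply pow_lt; lra. apply pow_incr; lra. }
        assert (a5 : / (c / 2 - - x) ^ 2 <= / (c / 2 - T) ^ 2).
        { apply Rinv_le_contravar. apply pow_lt; lra. apply pow_incr; lra. }
        assert (i1 : 0 <= 101 / 100 / (2 * T - x) + 101 / c).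
        { unfold Rdiv. apply Rplus_le_le_0_compat; apply Rmult_le_pos; try lra; left; apply Rinv_0_lt_compat; lra. }
        assert (i2 : 0 <= 101 / 100 / (2 * T - - x) + 101 / c).
        { unfold Rdiv. apply Rplus_le_le_0_compat; apply Rmult_le_pos; try lra; left; apply Rinv_0_lt_compat; lra. }
        assert (rc : 0 <= Rz / c) by (unfold Rdiv; apply Rmult_le_pos; auto; left; apply Rinv_0_lt_compat; lra).
        assert (ip : 0 < / p) by (apply Rinv_0_lt_compat; auto).
        assert (e1 : Rz / c * (c / (c - x)) ^ 2 * (101 / 100 / (2 * T - x) + 101 / c)
                     <= Rz / c * (c / (c - T)) ^ 2 * (101 / 100 / (2 * T - x) + 101 / c)).
        { apply Rmult_le_compat_r; auto. apply Rmult_le_compat_l; auto. }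
        assert (e2 : Rz / c * (c / (c - - x)) ^ 2 * (101 / 100 / (2 * T - - x) + 101 / c)
                     <= Rz / c * (c / (c - T)) ^ 2 * (101 / 100 / (2 * T - - x) + 101 / c)).
        { apply Rmult_le_compat_r; auto. apply Rmult_le_compat_l; auto. }
        assert (e3 : Rz / c * (c / (c - T)) ^ 2 * (101 / 100 / (2 * T - x) + 101 / c)
                   + Rz / c * (c / (c - T)) ^ 2 * (101 / 100 / (2 * T - - x) + 101 / c)
                   <= Rz / c * (c / (c - T)) ^ 2 * (404 / (300 * T) + 202 / c)).
        { replace (Rz / c * (c / (c - T)) ^ 2 * (101 / 100 / (2 * T - x) + 101 / c)
                   + Rz / c * (c / (c - T)) ^ 2 * (101 / 100 / (2 * T - - x) + 101 / c))
            with (Rz / c * (c / (c - T)) ^ 2 * ((101 / 100 / (2 * T - x) + 101 / 100 / (2 * T - - x)) + 202 / c))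
            by (field; repeat split; lra).
          apply Rmult_le_compat_l. apply Rmult_le_pos; auto. apply pow2_ge_0. lra. }
        assert (e4 : 2 * / p / (c / 2 - x) ^ 2 + 2 * / p / (c / 2 - - x) ^ 2 <= 4 * / p / (c / 2 - T) ^ 2).
        { unfold Rdiv. nra. }
        unfold B. lra. }
      assert (Q3 : c ^ 2 / 4 * (c * Rz / (c - T) ^ 2) * (Wm + Wp) <= c ^ 2 / 4 * (c * Rz / (c - T) ^ 2) * B).
      { apply Rmult_le_compat_l; auto.
        apply Rmult_le_pos. nra. unfold Rdiv. apply Rmult_le_pos. nra. left; apply Rinv_0_lt_compat, pow_lt; lra. }
      replace (c ^ 2 / 4 * (c * Rz / (c - T) ^ 2) * B) with
        (Rz ^ 2 * (c ^ 4 / (c - T) ^ 4) / 4 * (404 / (300 * T) + 202 / c)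
          + c ^ 3 * (Rz / p) / ((c - T) ^ 2 * (c / 2 - T) ^ 2)) in Q3 by (unfold B; field; repeat split; lra).
      pose proof (num_sharp c T p Rz HT ltac:(lra) R0p RB pp p2b).
      lra. }
  assert (PI2 : 2 / (PI ^ 2 * T) = 2 * p ^ 4 / T).
  { replace (p ^ 4) with ((p ^ 2) ^ 2) by ring. rewrite p4. field. lra. }
  rewrite PI2. lra.
Qed.
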